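(* For every $\lambda\in[1/2,1)$, there is no maximally entangled state in the set $S(\lambda,1-\lambda,0,0)$ of two-qubit density matrices with spectrum $\{\lambda,1-\lambda,0,0\}$.
   Context: $\mathcal{D}$ denotes the set of two-qubit density matrices, i.e. $\rho\in\mathbb{C}^{4\times4}$ with $\rho=\rho^\dagger$, $\rho\ge 0$, $\mathrm{tr}\rho=1$, acting on $\mathbb{C}^2\otimes\mathbb{C}^2$. For eigenvalues $\lambda_1\ge\lambda_2\ge\lambda_3\ge\lambda_4\ge0$ with $\sum_i\lambda_i=1$, $S(\lambda_1,\lambda_2,\lambda_3,\lambda_4)=\{\rho\in\mathcal{D}:\text{the eigenvalues of }\rho\text{ (with multiplicity) are }\lambda_1,\lambda_2,\lambda_3,\lambda_4\}$. For a set $S\subseteq\mathcal{D}$, a state $\rho\in S$ is called a maximally entangled state in $S$ if for every $\sigma\in S$ there exists an LOCC map (a quantum channel implementable by local operations on each qubit and classical communication between the two parties) $\Lambda$ with $\Lambda(\rho)=\sigma$. *)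

(* Defs.v *)
From HB Require Import structures.
From mathcomp Require Import all_boot all_order all_algebra.
From mathcomp Require Import complex mxtens.
From mathcomp Require Import reals.
Set Implicit Arguments. Unset Strict Implicit. Unset Printing Implicit Defensive.
Import Order.TTheory GRing.Theory Num.Theory.
Local Open Scope ring_scope.

Section QInfo.
Variable R : realType.
Local Notation C := R[i].

Definition adjmx {m n : nat} (A : 'M[C]_(m, n)) : 'M[C]_(n, m) :=
  (map_mx Num.conj A)^T.

Definition is_density {d : nat} (rho : 'M[C]_d) : Prop :=
  [/\ adjmx rho = rho,
      (forall v : 'cV[C]_d, 0 <= (adjmx v *m rho *m v) 0 0)
    & \tr rho = 1].

(* two-qubit density matrices: C^4 = C^2 (x) C^2, first factor = Alice *)
Definition two_qubit_density (rho : 'M[C]_(2 * 2)) : Prop := is_density rho.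

(* S(l1,l2,l3,l4): density matrices whose eigenvalues, with (algebraic)
   multiplicity, are l1,l2,l3,l4, i.e. whose characteristic polynomial is
   prod_k (X - l_k). *)
Definition S_spec (l1 l2 l3 l4 : R) : 'M[C]_(2 * 2) -> Prop :=
  fun rho => two_qubit_density rho /\
    char_poly rho = \prod_(a <- [:: real_complex R l1; real_complex R l2; real_complex R l3; real_complex R l4]) ('X - a%:P).

(* A protocol on a system of local
   dimensions (da, db) is a tree: at each node one party (Alice or Bob)
   performs a local measurement/operation given by Kraus operators
   K_0..K_{n-1} (possibly changing her/his local dimension) with
   sum_i K_i^* K_i = 1, broadcasts the outcome i, and the protocol continues
   with the sub-protocol (next i). *)
Inductive locc_protocol : nat -> nat -> Type :=
| LOCC_Leaf : locc_protocol 2 2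
| LOCC_Alice (da db da' n : nat) (K : 'I_n -> 'M[C]_(da', da))
    (complete : \sum_(i < n) adjmx (K i) *m K i = 1%:M)
    (next : 'I_n -> locc_protocol da' db) : locc_protocol da db
| LOCC_Bob (da db db' n : nat) (K : 'I_n -> 'M[C]_(db', db))
    (complete : \sum_(i < n) adjmx (K i) *m K i = 1%:M)
    (next : 'I_n -> locc_protocol da db') : locc_protocol da db.

Fixpoint locc_apply (da db : nat) (p : locc_protocol da db) :
    'M[C]_(da * db) -> 'M[C]_(2 * 2) :=
  match p in locc_protocol da db return 'M[C]_(da * db) -> 'M[C]_(2 * 2) with
  | LOCC_Leaf => fun rho => rho
  | @LOCC_Alice da db da' n K _ next => fun rho =>
      \sum_(i < n)
        locc_apply (next i)
          ((K i *t (1%:M : 'M[C]_db)) *m rho *m adjmx (K i *t (1%:M : 'M[C]_db)))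
  | @LOCC_Bob da db db' n K _ next => fun rho =>
      \sum_(i < n)
        locc_apply (next i)
          (((1%:M : 'M[C]_da) *t K i) *m rho *m adjmx ((1%:M : 'M[C]_da) *t K i))
  end.

Definition is_LOCC (Lam : 'M[C]_(2 * 2) -> 'M[C]_(2 * 2)) : Prop :=
  exists p : locc_protocol 2 2, forall X, Lam X = locc_apply p X.

Definition maximally_entangled_in (S : 'M[C]_(2 * 2) -> Prop)
    (rho : 'M[C]_(2 * 2)) : Prop :=
  S rho /\ forall sigma, S sigma ->
    exists Lam, is_LOCC Lam /\ Lam rho = sigma.

End QInfo.

(* Main.v *)
Require Import Defs.
From HB Require Import structures.
From mathcomp Require Import all_boot all_order all_algebra.
From mathcomp Require Import complex mxtens reals.
From mathcomp Require Import ring.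
Import Order.TTheory GRing.Theory Num.Theory.
Local Open Scope ring_scope.

Set Implicit Arguments. Unset Strict Implicit. Unset Printing Implicit Defensive.

Section Gen.
Variable R : realType.
Local Notation C := R[i].

Lemma det22 (A : 'M[C]_2) : \det A = A 0 0 * A 1 1 - A 0 1 * A 1 0.
Proof.
rewrite (expand_det_row _ 0) !big_ord_recl big_ord0 /cofactor !det_mx11 !mxE /=.
rewrite !expr0 !expr1 addr0 mul1r mulN1r.
have -> : lift 0 (0 : 'I_1) = 1 by apply: val_inj.
have -> : lift (1 : 'I_2) (0 : 'I_1) = 0 by apply: val_inj.
by rewrite mulrN.
Qed.

Lemma adjmxE m n (A : 'M[C]_(m,n)) i j : adjmx A i j = (A j i)^*.
Proof. by rewrite /adjmx !mxE. Qed.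

Lemma adjmxK m n (A : 'M[C]_(m,n)) : adjmx (adjmx A) = A.
Proof. by apply/matrixP => i j; rewrite !adjmxE conjCK. Qed.

Lemma adjmxM m n p (A : 'M[C]_(m,n)) (B : 'M[C]_(n,p)) :
  adjmx (A *m B) = adjmx B *m adjmx A.
Proof.
apply/matrixP => i j; rewrite !adjmxE !mxE rmorph_sum; apply: eq_bigr => k _.
by rewrite !adjmxE rmorphM mulrC.
Qed.

Lemma adjmxD m n (A B : 'M[C]_(m,n)) : adjmx (A + B) = adjmx A + adjmx B.
Proof. by apply/matrixP => i j; rewrite !adjmxE !mxE rmorphD. Qed.

Lemma adjmxZ m n (a : C) (A : 'M[C]_(m,n)) : adjmx (a *: A) = a^* *: adjmx A.
Proof. by apply/matrixP => i j; rewrite !adjmxE !mxE rmorphM. Qed.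

Lemma adjmx1 n : adjmx (1%:M : 'M[C]_n) = 1%:M.
Proof.
apply/matrixP => i j; rewrite !adjmxE !mxE.
by rewrite rmorph_nat eq_sym.
Qed.

Lemma adjmx_tens m n p q (A : 'M[C]_(m,n)) (B : 'M[C]_(p,q)) :
  adjmx (A *t B) = adjmx A *t adjmx B.
Proof. by apply/matrixP => i j; rewrite !adjmxE !mxE rmorphM. Qed.

Lemma tens11 : (1%:M : 'M[C]_2) *t (1%:M : 'M[C]_2) = 1%:M.
Proof.
apply/matrixP => i j.
case: (mxtens_indexP i) => a b; case: (mxtens_indexP j) => c d.
rewrite tensmxE !mxE (inj_eq (can_inj (@mxtens_indexK 2 2))) xpair_eqE.
by case: (a == c); case: (b == d); rewrite /= ?mulr1n ?mulr0n ?mulr1 ?mulr0.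
Qed.

End Gen.


Definition ix (a b : 'I_2) : 'I_(2*2) := mxtens_index (a, b).

Lemma ord2P (a : 'I_2) : a = 0 \/ a = 1.
Proof. by case: a => [[|[|n]] // Hn]; [left|right]; apply: val_inj. Qed.

Lemma sum2 (T : nmodType) (F : 'I_2 -> T) : \sum_k F k = F 0 + F 1.
Proof.
rewrite !big_ord_recl big_ord0 addr0.
by have -> : lift 0 (0 : 'I_1) = 1 by apply: val_inj.
Qed.

Lemma sum4 (T : nmodType) (F : 'I_(2*2) -> T) :
  \sum_k F k = F (ix 0 0) + F (ix 0 1) + F (ix 1 0) + F (ix 1 1).
Proof.
rewrite !big_ord_recl big_ord0 addr0 !addrA.
congr (F _ + F _ + F _ + F _); by apply: val_inj.
Qed.

Lemma ix_inj a b c d : (ix a b == ix c d) = (a == c) && (b == d).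
Proof. by rewrite /ix (inj_eq (can_inj (@mxtens_indexK 2 2))) xpair_eqE. Qed.

Lemma ixP (P : 'I_(2*2) -> Prop) :
  P (ix 0 0) -> P (ix 0 1) -> P (ix 1 0) -> P (ix 1 1) -> forall k, P k.
Proof.
move=> H1 H2 H3 H4 k; case: (mxtens_indexP k) => a b.
by case: (ord2P a) => ->; case: (ord2P b) => ->.
Qed.

Section Conc.
Variable R : realType.
Local Notation C := R[i].

Lemma tensE m n (A : 'M[C]_(2,m)) (B : 'M[C]_(2,n)) a b k l :
  (A *t B) (ix a b) (mxtens_index (k, l)) = A a k * B b l.
Proof. by rewrite /ix tensmxE. Qed.

Lemma tensE2 (A B : 'M[C]_2) a b c d :
  (A *t B) (ix a b) (ix c d) = A a c * B b d.
Proof. by rewrite /ix tensmxE. Qed.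

Definition Bf (v w : 'cV[C]_(2*2)) : C :=
  v (ix 0 0) 0 * w (ix 1 1) 0 + v (ix 1 1) 0 * w (ix 0 0) 0
  - v (ix 0 1) 0 * w (ix 1 0) 0 - v (ix 1 0) 0 * w (ix 0 1) 0.

Lemma tens_vecE (A B : 'M[C]_2) (v : 'cV[C]_(2*2)) a b :
  ((A *t B) *m v) (ix a b) 0 =
  A a 0 * B b 0 * v (ix 0 0) 0 + A a 0 * B b 1 * v (ix 0 1) 0 +
  A a 1 * B b 0 * v (ix 1 0) 0 + A a 1 * B b 1 * v (ix 1 1) 0.
Proof. by rewrite mxE sum4 !tensE2. Qed.

Lemma Bf_tens (A B : 'M[C]_2) v w :
  Bf ((A *t B) *m v) ((A *t B) *m w) = \det A * \det B * Bf v w.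
Proof. rewrite /Bf !tens_vecE !det22; ring. Qed.

End Conc.

Section Conc2.
Variable R : realType.
Local Notation C := R[i].

Lemma vec4P (v w : 'cV[C]_(2*2)) :
  v (ix 0 0) 0 = w (ix 0 0) 0 -> v (ix 0 1) 0 = w (ix 0 1) 0 ->
  v (ix 1 0) 0 = w (ix 1 0) 0 -> v (ix 1 1) 0 = w (ix 1 1) 0 -> v = w.
Proof.
move=> H1 H2 H3 H4; apply/matrixP => k j; rewrite [j]ord1.
by move: k; apply: ixP.
Qed.

Lemma tens_inj (A B : 'M[C]_2) (v : 'cV[C]_(2*2)) :
  \det A * \det B != 0 -> (A *t B) *m v = 0 -> v = 0.
Proof.
move=> hd hv.
have : (\adj A *t \adj B) *m ((A *t B) *m v) = (\det A * \det B) *: v.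
  rewrite mulmxA tensmx_mul !mul_adj_mx.
  apply: vec4P; rewrite tens_vecE !mxE /= ?mulr1n ?mulr0n; ring.
rewrite hv mulmx0 => /esym /eqP; rewrite scaler_eq0 (negbTE hd) /=.
by move/eqP.
Qed.

End Conc2.

Section PSD.
Variable R : realType.
Local Notation C := R[i].

Definition hermm n (P : 'M[C]_n) := adjmx P = P.
Definition psdm n (P : 'M[C]_n) := forall v : 'cV[C]_n, 0 <= (adjmx v *m P *m v) 0 0.

Lemma adj11 (M : 'M[C]_1) : adjmx M 0 0 = (M 0 0)^*.
Proof. by rewrite adjmxE. Qed.

Lemma psd_conj n (P : 'M[C]_n) (x z : 'cV[C]_n) : hermm P ->
  ((adjmx x *m P *m z) 0 0)^* = (adjmx z *m P *m x) 0 0.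
Proof.
move=> hP; rewrite -adj11 !adjmxM adjmxK hP mulmxA //.
Qed.

Lemma real_ge0 (d : C) : 0 <= d -> d^* = d.
Proof. by move=> hd; apply: conj_Creal; rewrite realE hd. Qed.

Lemma mxaddE m n (A B : 'M[C]_(m,n)) i j : (A + B) i j = A i j + B i j.
Proof. by rewrite mxE. Qed.
Lemma mxscaleE m n a (A : 'M[C]_(m,n)) i j : (a *: A) i j = a * A i j.
Proof. by rewrite mxE. Qed.

Lemma adjmx_delta n (i : 'I_n) : adjmx (delta_mx i 0 : 'cV[C]_n) = delta_mx 0 i.
Proof. by apply/matrixP => a b; rewrite adjmxE !mxE rmorph_nat andbC. Qed.

Lemma psd0 n (P : 'M[C]_n) (y : 'cV[C]_n) :
  hermm P -> psdm P -> (adjmx y *m P *m y) 0 0 = 0 -> P *m y = 0.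
Proof.
move=> hP pP hy.
suff H : forall x : 'cV[C]_n, (adjmx x *m P *m y) 0 0 = 0.
  apply/matrixP => i j; rewrite [j]ord1.
  have := H (delta_mx i 0); rewrite adjmx_delta -mulmxA -rowE mxE => ->.
  by rewrite mxE.
move=> x.
have hc' := psd_conj x y hP.
have d0 := pP x.
have key : forall t, 0 <= (adjmx (y + t *: x) *m P *m (y + t *: x)) 0 0.
  by move=> t; apply: pP.
have E : forall t, adjmx (y + t *: x) *m P *m (y + t *: x) =
   adjmx y *m P *m y + t *: (adjmx y *m P *m x) + t^* *: (adjmx x *m P *m y)
   + (t^* * t) *: (adjmx x *m P *m x).
  move=> t; rewrite adjmxD adjmxZ !mulmxDl !mulmxDr -!scalemxAl -!scalemxAr scalerA.
  by rewrite !addrA; congr (_ + _); rewrite -!addrA; congr (_ + _); rewrite addrC.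
have key2 : forall t, 0 <= t * (adjmx y *m P *m x) 0 0 + t^* * (adjmx x *m P *m y) 0 0
     + t^* * t * (adjmx x *m P *m x) 0 0.
  by move=> t; have := key t; rewrite E !mxaddE !mxscaleE hy add0r.
clear key E hy; rewrite -hc' in key2.
move: (adjmx x *m P *m y) (adjmx x *m P *m x) d0 key2 => M3 M4.
move: (M3 0 0) (M4 0 0) => c d d0 key2.
have dr : d^* = d by apply: real_ge0.
have d1 : 0 < d + 1 by rewrite ltr_wpDl.
have d1n : d + 1 != 0 by rewrite gt_eqF.
have := key2 (- c / (d + 1)).
have -> : (- c / (d + 1)) * c^* + (- c / (d + 1))^* * c +
   (- c / (d + 1))^* * (- c / (d + 1)) * d = - (c * c^*) * ((d + 2) / (d + 1) ^+ 2).
  have tc : (- c / (d + 1))^* = - c^* / (d + 1).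
    by rewrite -{2}dr fmorph_div rmorphN rmorphD rmorph1.
  rewrite tc; field; exact: d1n.
have p2 : 0 < (d + 2) / (d + 1) ^+ 2.
  by rewrite divr_gt0 ?exprn_gt0 // ltr_wpDl.
rewrite pmulr_lge0 // oppr_ge0 => h.
have : c * c^* = 0 by apply/eqP; rewrite eq_le h mul_conjC_ge0.
by move/eqP; rewrite mul_conjC_eq0 => /eqP.
Qed.

End PSD.


Section LOCC.
Variable R : realType.
Local Notation C := R[i].

Fixpoint sepl da db (p : locc_protocol R da db) {struct p} :
   seq ('M[C]_(2,da) * 'M[C]_(2,db)) :=
  match p in locc_protocol _ da db return seq ('M[C]_(2,da) * 'M[C]_(2,db)) with
  | LOCC_Leaf => [:: (1%:M, 1%:M)]
  | @LOCC_Alice _ da db da' n K _ next =>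
      [seq (AB.1 *m K i, AB.2) | i <- enum 'I_n, AB <- sepl (next i)]
  | @LOCC_Bob _ da db db' n K _ next =>
      [seq (AB.1, AB.2 *m K i) | i <- enum 'I_n, AB <- sepl (next i)]
  end.

Definition Tm da db (AB : 'M[C]_(2,da) * 'M[C]_(2,db)) (X : 'M[C]_(da * db)) :=
  (AB.1 *t AB.2) *m X *m adjmx (AB.1 *t AB.2).

Lemma sepP da db (p : locc_protocol R da db) X :
  locc_apply p X = \sum_(AB <- sepl p) Tm AB X.
Proof.
elim: p X => [|a b a' n K _ next IH|a b b' n K _ next IH] X /=.
- by rewrite big_seq1 /Tm /= tens11 adjmx1 mul1mx mulmx1.
- rewrite big_allpairs_dep /= big_enum /=; apply: eq_bigr => i _.
  rewrite IH; apply: eq_bigr => AB _; rewrite /Tm /=.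
  have -> : (AB.1 *m K i) *t AB.2 = (AB.1 *t AB.2) *m (K i *t 1%:M).
    by rewrite tensmx_mul mulmx1.
  by rewrite adjmxM !mulmxA.
- rewrite big_allpairs_dep /= big_enum /=; apply: eq_bigr => i _.
  rewrite IH; apply: eq_bigr => AB _; rewrite /Tm /=.
  have -> : AB.1 *t (AB.2 *m K i) = (AB.1 *t AB.2) *m (1%:M *t K i).
    by rewrite tensmx_mul mulmx1.
  by rewrite adjmxM !mulmxA.
Qed.


Lemma Tm_psd (AB : 'M[C]_2 * 'M[C]_2) (rho : 'M[C]_(2*2)) : psdm rho -> psdm (Tm AB rho).
Proof.
move=> hp v; rewrite /Tm.
have -> : adjmx v *m ((AB.1 *t AB.2) *m rho *m adjmx (AB.1 *t AB.2)) *m v =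
  adjmx (adjmx (AB.1 *t AB.2) *m v) *m rho *m (adjmx (AB.1 *t AB.2) *m v).
  by rewrite adjmxM adjmxK !mulmxA.
exact: hp.
Qed.

Lemma Tm_herm (AB : 'M[C]_2 * 'M[C]_2) (rho : 'M[C]_(2*2)) : hermm rho -> hermm (Tm AB rho).
Proof. by move=> hr; rewrite /hermm /Tm !adjmxM adjmxK hr mulmxA. Qed.

Lemma adjmx0 m n : adjmx (0 : 'M[C]_(m,n)) = 0.
Proof. by apply/matrixP => i j; rewrite adjmxE !mxE rmorph0. Qed.

Lemma LW (rho sigma : 'M[C]_(2*2)) (s : seq ('M[C]_2 * 'M[C]_2)) (g : 'cV[C]_(2*2)) :
  hermm rho -> psdm rho -> sigma = \sum_(AB <- s) Tm AB rho -> sigma *m g = 0 ->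
  forall AB, AB \in s -> forall y : 'cV[C]_(2*2), adjmx g *m ((AB.1 *t AB.2) *m (rho *m y)) = 0.
Proof.
move=> hr pr hs hg AB hAB y.
have h0 : (adjmx g *m sigma *m g) 0 0 = 0 by rewrite -mulmxA hg mulmx0 mxE.
rewrite hs mulmx_sumr mulmx_suml summxE in h0.
have := psumr_eq0 s (P:=predT) (fun AB _ => Tm_psd AB pr g).
rewrite h0 eqxx => /esym /allP /(_ AB hAB) /= /eqP h1.
have h2 : rho *m (adjmx (AB.1 *t AB.2) *m g) = 0.
  apply: psd0 => //; rewrite -h1 /Tm adjmxM adjmxK !mulmxA //.
have e : adjmx g *m (AB.1 *t AB.2) = adjmx (adjmx (AB.1 *t AB.2) *m g).
  by rewrite adjmxM adjmxK.
have e2 : adjmx (adjmx (AB.1 *t AB.2) *m g) *m rho = adjmx (rho *m (adjmx (AB.1 *t AB.2) *m g)).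
  by rewrite (adjmxM rho) hr.
by rewrite mulmxA e mulmxA e2 h2 adjmx0 mul0mx.
Qed.

End LOCC.


Section V4.
Variable R : realType.
Local Notation C := R[i].

Definition v4 (x00 x01 x10 x11 : C) : 'cV[C]_(2*2) :=
  \col_k (if k == ix 0 0 then x00 else if k == ix 0 1 then x01
          else if k == ix 1 0 then x10 else x11).

Lemma v4E x00 x01 x10 x11 :
  [/\ v4 x00 x01 x10 x11 (ix 0 0) 0 = x00, v4 x00 x01 x10 x11 (ix 0 1) 0 = x01,
      v4 x00 x01 x10 x11 (ix 1 0) 0 = x10 & v4 x00 x01 x10 x11 (ix 1 1) 0 = x11].
Proof. by split; rewrite mxE !ix_inj. Qed.

End V4.

Section Gen2.
Variable R : realType.
Local Notation C := R[i].

Lemma cp_sim n (S U V : 'M[C]_n) (d : 'rV[C]_n) :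
  S *m U = U *m diag_mx d -> V *m U = 1%:M ->
  char_poly S = \prod_(i < n) ('X - (d 0 i)%:P).
Proof.
move=> hSU hVU.
have hdU : \det U != 0.
  apply/eqP => h0; have := congr1 determinant hVU.
  by rewrite det_mulmx h0 mulr0 det1 => /eqP; rewrite eq_sym oner_eq0.
have E : char_poly_mx S *m map_mx polyC U = map_mx polyC U *m char_poly_mx (diag_mx d).
  rewrite /char_poly_mx mulmxBl mulmxBr -scalar_mxC -!map_mxM hSU //.
have := congr1 determinant E; rewrite !det_mulmx det_map_mx => h.
have hU' : (\det U)%:P != 0 :> {poly C} by rewrite polyC_eq0.
have := mulfI hU'; move=> /(_ (\det (char_poly_mx S)) (\det (char_poly_mx (diag_mx d)))).
rewrite mulrC h => /(_ erefl) hh; rewrite /char_poly hh -/(char_poly _).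
by rewrite char_poly_trig ?diag_mx_is_trig //; apply: eq_bigr => i _; rewrite mxE eqxx mulr1n.
Qed.

Definition dot n (u c : 'cV[C]_n) : C := (adjmx u *m c) 0 0.

Lemma dot4 (u c : 'cV[C]_(2*2)) : dot u c =
  (u (ix 0 0) 0)^* * c (ix 0 0) 0 + (u (ix 0 1) 0)^* * c (ix 0 1) 0 +
  (u (ix 1 0) 0)^* * c (ix 1 0) 0 + (u (ix 1 1) 0)^* * c (ix 1 1) 0.
Proof. by rewrite /dot mxE sum4 !adjmxE. Qed.

Definition sig2 n (a b : C) (u w : 'cV[C]_n) : 'M[C]_n :=
  a *: (u *m adjmx u) + b *: (w *m adjmx w).

Lemma sig2E n a b (u w : 'cV[C]_n) i j :
  sig2 a b u w i j = a * (u i 0 * (u j 0)^*) + b * (w i 0 * (w j 0)^*).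
Proof. by rewrite /sig2 !mxE !big_ord1 !adjmxE. Qed.

Lemma R1mul n (u c : 'cV[C]_n) : u *m adjmx u *m c = dot u c *: u.
Proof. by rewrite -mulmxA [adjmx u *m c]mx11_scalar mul_mx_scalar. Qed.

Lemma sig2_mul n a b (u w c : 'cV[C]_n) :
  sig2 a b u w *m c = (a * dot u c) *: u + (b * dot w c) *: w.
Proof. by rewrite /sig2 mulmxDl -!scalemxAl !R1mul !scalerA. Qed.

Lemma sig2_herm n a b (u w : 'cV[C]_n) : a^* = a -> b^* = b -> hermm (sig2 a b u w).
Proof. by move=> ha hb; rewrite /hermm /sig2 adjmxD !adjmxZ !adjmxM !adjmxK ha hb. Qed.

Lemma dot_conj n (u v : 'cV[C]_n) : (dot u v)^* = dot v u.
Proof. by rewrite /dot -adj11 adjmxM adjmxK. Qed.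

Lemma sig2_psd n a b (u w : 'cV[C]_n) : 0 <= a -> 0 <= b -> psdm (sig2 a b u w).
Proof.
move=> ha hb v.
have -> : adjmx v *m sig2 a b u w *m v = adjmx v *m (sig2 a b u w *m v) by rewrite mulmxA.
rewrite sig2_mul mulmxDr -!scalemxAr !mxaddE !mxscaleE.
rewrite -!/(dot v _) -(dot_conj u v) -(dot_conj w v).
by rewrite -!mulrA addr_ge0 // mulr_ge0 // mul_conjC_ge0.
Qed.

Lemma sig2_tr n a b (u w : 'cV[C]_n) : \tr (sig2 a b u w) = a * dot u u + b * dot w w.
Proof. by rewrite /sig2 mxtraceD !mxtraceZ (mxtrace_mulC u) (mxtrace_mulC w) !trace_mx11. Qed.

End Gen2.

Section Targets.
Variable R : realType.
Local Notation C := R[i].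

Definition mk4 (c1 c2 c3 c4 : 'cV[C]_(2*2)) : 'M[C]_(2*2) :=
  \matrix_(i, j) (if j == ix 0 0 then c1 else if j == ix 0 1 then c2
                  else if j == ix 1 0 then c3 else c4) i 0.

Lemma mxcolP m n (A B : 'M[C]_(m,n)) : (forall j, col j A = col j B) -> A = B.
Proof. by move=> h; apply/matrixP => i j; move/matrixP: (h j) => /(_ i 0); rewrite !mxE. Qed.

Lemma col_mk4 c1 c2 c3 c4 :
  [/\ col (ix 0 0) (mk4 c1 c2 c3 c4) = c1, col (ix 0 1) (mk4 c1 c2 c3 c4) = c2,
      col (ix 1 0) (mk4 c1 c2 c3 c4) = c3 & col (ix 1 1) (mk4 c1 c2 c3 c4) = c4].
Proof. by split; apply/matrixP => i j; rewrite [j]ord1 !mxE !ix_inj. Qed.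

Lemma col_diag m (U : 'M[C]_(m, 2*2)) d j : col j (U *m diag_mx d) = d 0 j *: col j U.
Proof. by apply/matrixP => i k; rewrite mul_mx_diag !mxE mulrC. Qed.

Lemma col_mulmx m n p (A : 'M[C]_(m,n)) (B : 'M[C]_(n,p)) j : col j (A *m B) = A *m col j B.
Proof. by rewrite !colE mulmxA. Qed.

Lemma prod4 (T : pzRingType) (F : 'I_(2*2) -> T) :
  \prod_k F k = F (ix 0 0) * F (ix 0 1) * F (ix 1 0) * F (ix 1 1).
Proof.
rewrite !big_ord_recl big_ord0 mulr1 !mulrA.
congr (F _ * F _ * F _ * F _); by apply: val_inj.
Qed.

Lemma cp_sim4 (S : 'M[C]_(2*2)) c1 c2 c3 c4 r1 r2 r3 r4 (d1 d2 d3 d4 : C) :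
  S *m c1 = d1 *: c1 -> S *m c2 = d2 *: c2 -> S *m c3 = d3 *: c3 -> S *m c4 = d4 *: c4 ->
  (mk4 r1 r2 r3 r4)^T *m mk4 c1 c2 c3 c4 = 1%:M ->
  char_poly S = \prod_(a <- [:: d1; d2; d3; d4]) ('X - a%:P).
Proof.
move=> h1 h2 h3 h4 hV.
pose d : 'rV[C]_(2*2) := \row_k (if k == ix 0 0 then d1 else if k == ix 0 1 then d2
                  else if k == ix 1 0 then d3 else d4).
rewrite (@cp_sim _ _ S (mk4 c1 c2 c3 c4) _ d _ hV).
  by rewrite !big_cons big_nil mulr1 prod4 !mxE !ix_inj /= !mulrA.
case: (col_mk4 c1 c2 c3 c4) => e1 e2 e3 e4.
by apply: mxcolP; apply: ixP; rewrite col_mulmx col_diag ?e1 ?e2 ?e3 ?e4 !mxE !ix_inj.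
Qed.

End Targets.


Section T.
Variable R : realType.
Local Notation C := R[i].
Variable L : C.
Hypothesis L0 : 0 <= L.
Hypothesis L1 : 0 <= 1 - L.

Definition sT := sig2 (L / 2) (1 - L) (v4 1 0 0 1) (v4 0 1 0 0).

Lemma sT_ker1 : sT *m v4 0 0 1 0 = 0.
Proof.
rewrite /sT sig2_mul !dot4; apply: vec4P; rewrite !mxE !ix_inj /= ?rmorph0 ?rmorph1; ring.
Qed.


Ltac s4 := rewrite ?sig2_mul ?dot4; apply: vec4P; rewrite !mxE !ix_inj /= ?rmorph0 ?rmorph1.

Lemma sT_ker2 : sT *m v4 1 0 0 (-1) = 0.
Proof. by s4; ring. Qed.

Lemma sT_e1 : sT *m v4 1 0 0 1 = L *: v4 1 0 0 1.
Proof. s4; field; by rewrite ?pnatr_eq0. Qed.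

Lemma sT_e2 : sT *m v4 0 1 0 0 = (1 - L) *: v4 0 1 0 0.
Proof. by s4; ring. Qed.

Lemma sT_e3 : sT *m v4 1 0 0 (-1) = 0 *: v4 1 0 0 (-1).
Proof. by rewrite scale0r sT_ker2. Qed.

Lemma sT_e4 : sT *m v4 0 0 1 0 = 0 *: v4 0 0 1 0.
Proof. by rewrite scale0r sT_ker1. Qed.

Lemma sT_V : (mk4 (v4 (1/2 : C) 0 0 (1/2)) (v4 (0:C) 1 0 0) (v4 (1/2:C) 0 0 (-1/2)) (v4 (0:C) 0 1 0))^T *m
   mk4 (v4 (1:C) 0 0 1) (v4 (0:C) 1 0 0) (v4 (1:C) 0 0 (-1)) (v4 (0:C) 0 1 0) = 1%:M.
Proof.
apply/matrixP => i j; move: i; apply: ixP; move: j; apply: ixP;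
  rewrite mxE sum4 !mxE !ix_inj /=; field; by rewrite ?pnatr_eq0.
Qed.

Lemma sT_cp : char_poly sT = \prod_(a <- [:: L; 1 - L; 0; 0]) ('X - a%:P).
Proof. exact: cp_sim4 sT_e1 sT_e2 sT_e3 sT_e4 sT_V. Qed.

Lemma sT_herm : hermm sT.
Proof. by apply: sig2_herm; apply: real_ge0; rewrite ?divr_ge0. Qed.

Lemma sT_psd : psdm sT.
Proof. by apply: sig2_psd; rewrite ?divr_ge0. Qed.

Lemma sT_tr : \tr sT = 1.
Proof. rewrite /sT sig2_tr !dot4 !mxE !ix_inj /= ?rmorph0 ?rmorph1; field; by rewrite ?pnatr_eq0. Qed.

Lemma sT00 : sT (ix 0 0) (ix 0 0) = L / 2.
Proof. by rewrite /sT sig2E !mxE !ix_inj /= ?rmorph0 ?rmorph1; ring. Qed.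


Definition sS := sig2 L ((1 - L) / 3) (v4 1 0 0 0) (v4 0 1 1 1).

Lemma sS_ker1 : sS *m v4 0 1 (-1) 0 = 0.
Proof. by s4; ring. Qed.

Lemma sS_ker2 : sS *m v4 0 1 1 (-2) = 0.
Proof. by s4; ring. Qed.

Lemma sS_e1 : sS *m v4 1 0 0 0 = L *: v4 1 0 0 0.
Proof. by s4; ring. Qed.

Lemma sS_e2 : sS *m v4 0 1 1 1 = (1 - L) *: v4 0 1 1 1.
Proof. s4; field; by rewrite ?pnatr_eq0. Qed.

Lemma sS_V : (mk4 (v4 (1 : C) 0 0 0) (v4 (0:C) (1/3) (1/3) (1/3)) (v4 (0:C) (1/2) (-1/2) 0)
     (v4 (0:C) (1/6) (1/6) (-1/3)))^T *m
   mk4 (v4 (1:C) 0 0 0) (v4 (0:C) 1 1 1) (v4 (0:C) 1 (-1) 0) (v4 (0:C) 1 1 (-2)) = 1%:M.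
Proof.
apply/matrixP => i j; move: i; apply: ixP; move: j; apply: ixP;
  rewrite mxE sum4 !mxE !ix_inj /=; field; by rewrite ?pnatr_eq0.
Qed.

Lemma sS_cp : char_poly sS = \prod_(a <- [:: L; 1 - L; 0; 0]) ('X - a%:P).
Proof.
apply: cp_sim4 sS_e1 sS_e2 _ _ sS_V; by rewrite scale0r ?sS_ker1 ?sS_ker2.
Qed.

Lemma sS_herm : hermm sS.
Proof. by apply: sig2_herm; apply: real_ge0; rewrite ?divr_ge0. Qed.

Lemma sS_psd : psdm sS.
Proof. by apply: sig2_psd; rewrite ?divr_ge0. Qed.

Lemma sS_tr : \tr sS = 1.
Proof. rewrite /sS sig2_tr !dot4 !mxE !ix_inj /= ?rmorph0 ?rmorph1; field; by rewrite ?pnatr_eq0. Qed.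

Lemma sS0001 : sS (ix 0 0) (ix 0 1) = 0.
Proof. by rewrite /sS sig2E !mxE !ix_inj /= ?rmorph0 ?rmorph1; ring. Qed.

Lemma sS0101 : sS (ix 0 1) (ix 0 1) = (1 - L) / 3.
Proof. by rewrite /sS sig2E !mxE !ix_inj /= ?rmorph0 ?rmorph1; ring. Qed.

End T.


Section V4E.
Variable R : realType.
Local Notation C := R[i].
Lemma v4E00 (a b c d : C) : v4 a b c d (ix 0 0) 0 = a. Proof. by case: (v4E a b c d). Qed.
Lemma v4E01 (a b c d : C) : v4 a b c d (ix 0 1) 0 = b. Proof. by case: (v4E a b c d). Qed.
Lemma v4E10 (a b c d : C) : v4 a b c d (ix 1 0) 0 = c. Proof. by case: (v4E a b c d). Qed.
Lemma v4E11 (a b c d : C) : v4 a b c d (ix 1 1) 0 = d. Proof. by case: (v4E a b c d). Qed.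
End V4E.
Ltac v4s := rewrite ?v4E00 ?v4E01 ?v4E10 ?v4E11 ?rmorph0 ?rmorph1 ?rmorphN1 ?rmorphN ?rmorph_nat.

Section M.
Variable R : realType.
Local Notation C := R[i].
Variable L : C.
Variable rho : 'M[C]_(2*2).
Hypothesis hr : hermm rho.
Hypothesis pr : psdm rho.

Local Notation K AB := (AB.1 *t AB.2).
Local Notation w4 AB y := ((AB.1 *t AB.2) *m (rho *m y)).

Lemma mul_delta m n (M : 'M[C]_(m,n)) i j : (M *m (delta_mx j 0 : 'cV[C]_n)) i 0 = M i j.
Proof. by rewrite -colE mxE. Qed.

Lemma TmE (AB : 'M[C]_2 * 'M[C]_2) i j :
  Tm AB rho i j = (w4 AB (adjmx (K AB) *m (delta_mx j 0 : 'cV[C]_(2*2)))) i 0.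
Proof. by rewrite /Tm !mulmxA mul_delta. Qed.

Lemma dotv (g w : 'cV[C]_(2*2)) : adjmx g *m w = 0 -> dot g w = 0.
Proof. by move=> h; rewrite /dot h mxE. Qed.

Lemma WT (s : seq ('M[C]_2 * 'M[C]_2)) : sT L = \sum_(AB <- s) Tm AB rho ->
  forall AB, AB \in s -> forall y : 'cV[C]_(2*2),
  (w4 AB y) (ix 1 0) 0 = 0 /\ (w4 AB y) (ix 0 0) 0 = (w4 AB y) (ix 1 1) 0.
Proof.
move=> hs AB hAB y.
have h1 := dotv (LW hr pr hs (sT_ker1 L) hAB y).
have h2 := dotv (LW hr pr hs (sT_ker2 L) hAB y).
move: h1 h2; move: (w4 AB y) => w; rewrite !dot4; v4s.
rewrite !mul0r !mul1r !add0r !addr0 => -> h2; split => //.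
by apply/eqP; rewrite -subr_eq0; apply/eqP; rewrite -h2; ring.
Qed.


Lemma WS (s : seq ('M[C]_2 * 'M[C]_2)) : sS L = \sum_(AB <- s) Tm AB rho ->
  forall AB, AB \in s -> forall y : 'cV[C]_(2*2),
  (w4 AB y) (ix 0 1) 0 = (w4 AB y) (ix 1 1) 0 /\ (w4 AB y) (ix 1 0) 0 = (w4 AB y) (ix 1 1) 0.
Proof.
move=> hs AB hAB y.
have h1 := dotv (LW hr pr hs (sS_ker1 L) hAB y).
have h2 := dotv (LW hr pr hs (sS_ker2 L) hAB y).
move: h1 h2; move: (w4 AB y) => w; rewrite !dot4; v4s => h1 h2.
have e1 : w (ix 1 0) 0 = w (ix 0 1) 0.
  by apply/eqP; rewrite eq_sym -subr_eq0; apply/eqP; rewrite -h1; ring.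
have e2 : 2 * (w (ix 0 1) 0 - w (ix 1 1) 0) = 0.
  by rewrite -h2 e1; ring.
move/eqP: e2; rewrite mulf_eq0 pnatr_eq0 /= subr_eq0 => /eqP e2.
by rewrite e1 e2.
Qed.

Lemma quad_psd n (T : 'M[C]_n) j : (adjmx (delta_mx j 0 : 'cV[C]_n) *m T *m (delta_mx j 0 : 'cV[C]_n)) 0 0 = T j j.
Proof. by rewrite adjmx_delta -rowE mul_delta mxE. Qed.

Lemma exT (s : seq ('M[C]_2 * 'M[C]_2)) : sT L = \sum_(AB <- s) Tm AB rho -> L != 0 ->
  has (fun AB => \det AB.1 * \det AB.2 != 0) s.
Proof.
move=> hs hL; apply: contraT => /hasPn H.
have : sT L (ix 0 0) (ix 0 0) = 0.
  rewrite hs summxE big_seq big1 // => AB hAB.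
  rewrite TmE; set y := (adjmx _ *m _).
  have [h10 h0011] := WT hs hAB y.
  have hb := Bf_tens AB.1 AB.2 (rho *m y) (rho *m y).
  move: (H AB hAB); rewrite negbK => /eqP hd; rewrite hd mul0r in hb.
  move: hb h10 h0011; rewrite /Bf; move: (w4 AB y) => w hb h10 h11.
  move: hb; rewrite h10 -h11 !mul0r mulr0 !subr0 => /eqP; rewrite -mulr2n mulrn_eq0 /= mulf_eq0 orbb.
  by move/eqP.
by rewrite sT00 => /eqP; rewrite mulf_eq0 invr_eq0 pnatr_eq0 orbF (negbTE hL).
Qed.


Lemma exS (s : seq ('M[C]_2 * 'M[C]_2)) : sS L = \sum_(AB <- s) Tm AB rho -> 1 - L != 0 ->
  has (fun AB => \det AB.1 * \det AB.2 != 0) s.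
Proof.
move=> hs hL; apply: contraT => /hasPn H.
have : sS L (ix 0 0) (ix 0 1) - sS L (ix 0 1) (ix 0 1) = 0.
  rewrite hs !summxE -sumrB big_seq big1 // => AB hAB.
  pose y := adjmx (K AB) *m (delta_mx (ix 0 1) 0 : 'cV[C]_(2*2)).
  have e1 : Tm AB rho (ix 0 0) (ix 0 1) = (w4 AB y) (ix 0 0) 0 by rewrite TmE.
  have e2 : Tm AB rho (ix 0 1) (ix 0 1) = (w4 AB y) (ix 0 1) 0 by rewrite TmE.
  have [h01 h10] := WS hs hAB y.
  have hb := Bf_tens AB.1 AB.2 (rho *m y) (rho *m y).
  move: (H AB hAB); rewrite negbK => /eqP hd; rewrite hd mul0r in hb.
  have hq : (w4 AB y) (ix 1 1) 0 * ((w4 AB y) (ix 0 0) 0 - (w4 AB y) (ix 1 1) 0) = 0.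
    move: hb h01 h10; rewrite /Bf; move: (w4 AB y) => w hb h01 h10.
    by rewrite -[RHS](mulr0 (2^-1)) -hb h01 h10; field.
  move/eqP: hq; rewrite mulf_eq0 => /orP [/eqP h0|].
    have hT : Tm AB rho *m (delta_mx (ix 0 1) 0 : 'cV[C]_(2*2)) = 0.
      apply: psd0; [exact: Tm_herm|exact: Tm_psd|].
      by rewrite quad_psd e2 h01 h0.
    by rewrite -mul_delta hT e2 h01 h0 mxE subrr.
  by rewrite subr_eq0 => /eqP h0; rewrite e1 e2 h01 h0 subrr.
by rewrite sS0001 sS0101 sub0r => /eqP; rewrite oppr_eq0 mulf_eq0 invr_eq0 pnatr_eq0 orbF (negbTE hL).
Qed.

End M.


Section G.
Variable R : realType.
Local Notation C := R[i].

Definition Gm (v1 v2 : 'cV[C]_(2*2)) := Bf v1 v1 * Bf v2 v2 - Bf v1 v2 ^+ 2.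

Lemma G_tens (A B : 'M[C]_2) v1 v2 :
  Gm ((A *t B) *m v1) ((A *t B) *m v2) = (\det A * \det B) ^+ 2 * Gm v1 v2.
Proof. rewrite /Gm !Bf_tens; ring. Qed.

Lemma G_WT (w1 w2 : 'cV[C]_(2*2)) :
  w1 (ix 1 0) 0 = 0 -> w1 (ix 0 0) 0 = w1 (ix 1 1) 0 ->
  w2 (ix 1 0) 0 = 0 -> w2 (ix 0 0) 0 = w2 (ix 1 1) 0 -> Gm w1 w2 = 0.
Proof. move=> a1 b1 a2 b2; rewrite /Gm /Bf a1 a2 b1 b2; ring. Qed.

Lemma G_WS (w1 w2 : 'cV[C]_(2*2)) :
  w1 (ix 0 1) 0 = w1 (ix 1 1) 0 -> w1 (ix 1 0) 0 = w1 (ix 1 1) 0 ->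
  w2 (ix 0 1) 0 = w2 (ix 1 1) 0 -> w2 (ix 1 0) 0 = w2 (ix 1 1) 0 ->
  Gm w1 w2 = - ((w1 (ix 0 0) 0 - w1 (ix 1 1) 0) * w2 (ix 1 1) 0
                - (w2 (ix 0 0) 0 - w2 (ix 1 1) 0) * w1 (ix 1 1) 0) ^+ 2.
Proof. move=> a1 b1 a2 b2; rewrite /Gm /Bf a1 a2 b1 b2; ring. Qed.


Lemma final (A B : 'M[C]_2) (v1 v2 : 'cV[C]_(2*2)) :
  \det A * \det B != 0 -> v1 != 0 -> (forall c, v2 != c *: v1) ->
  ((A *t B) *m v1) (ix 0 1) 0 = ((A *t B) *m v1) (ix 1 1) 0 ->
  ((A *t B) *m v1) (ix 1 0) 0 = ((A *t B) *m v1) (ix 1 1) 0 ->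
  ((A *t B) *m v2) (ix 0 1) 0 = ((A *t B) *m v2) (ix 1 1) 0 ->
  ((A *t B) *m v2) (ix 1 0) 0 = ((A *t B) *m v2) (ix 1 1) 0 ->
  Gm v1 v2 = 0 -> False.
Proof.
move=> hd hv1 hv2 a1 b1 a2 b2 hG.
have := G_tens A B v1 v2; rewrite hG mulr0 (G_WS a1 b1 a2 b2).
move/eqP; rewrite oppr_eq0 expf_eq0 /= subr_eq0 => /eqP hX.
have lin : forall x y : C, (A *t B) *m (x *: v1 - y *: v2) =
    x *: ((A *t B) *m v1) - y *: ((A *t B) *m v2).
  by move=> x y; rewrite mulmxBr -!scalemxAr.
move: lin a1 b1 a2 b2 hX.
move Ew1 : ((A *t B) *m v1) => w1; move Ew2 : ((A *t B) *m v2) => w2 lin a1 b1 a2 b2 hX.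
have hX' : (w1 (ix 0 0) 0 - w1 (ix 1 1) 0) * w2 (ix 1 1) 0 -
   (w2 (ix 0 0) 0 - w2 (ix 1 1) 0) * w1 (ix 1 1) 0 = 0 by rewrite hX subrr.
have eb : (A *t B) *m (w2 (ix 1 1) 0 *: v1 - w1 (ix 1 1) 0 *: v2) = 0.
  rewrite lin; apply: vec4P; rewrite !mxE ?a1 ?b1 ?a2 ?b2; first [ring | rewrite -[RHS]hX'; ring].
have ea : (A *t B) *m ((w2 (ix 0 0) 0 - w2 (ix 1 1) 0) *: v1 -
                       (w1 (ix 0 0) 0 - w1 (ix 1 1) 0) *: v2) = 0.
  rewrite lin; apply: vec4P; rewrite !mxE ?a1 ?b1 ?a2 ?b2; first [ring | rewrite -[RHS]hX'; ring | (apply: oppr_inj; rewrite oppr0 -[RHS]hX'; ring)].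
move/(tens_inj hd)/eqP: eb; rewrite subr_eq0 => /eqP eb.
move/(tens_inj hd)/eqP: ea; rewrite subr_eq0 => /eqP ea.
have [hb1|hb1] := eqVneq (w1 (ix 1 1) 0) 0; last first.
  apply: (negP (hv2 ((w1 (ix 1 1) 0)^-1 * w2 (ix 1 1) 0))).
  by rewrite -scalerA eb scalerA mulVf // scale1r eqxx.
have [ha1|ha1] := eqVneq (w1 (ix 0 0) 0 - w1 (ix 1 1) 0) 0; last first.
  apply: (negP (hv2 ((w1 (ix 0 0) 0 - w1 (ix 1 1) 0)^-1 * (w2 (ix 0 0) 0 - w2 (ix 1 1) 0)))).
  by rewrite -scalerA ea scalerA mulVf // scale1r eqxx.
have w10 : w1 = 0.
  apply: vec4P; rewrite mxE.
  - by move: ha1; rewrite hb1 subr0.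
  - by rewrite a1 hb1.
  - by rewrite b1 hb1.
  - by rewrite hb1.
by move: hv1; rewrite (tens_inj hd (etrans Ew1 w10)) eqxx.
Qed.

End G.


Unset Implicit Arguments. Set Strict Implicit. Set Printing Implicit Defensive.

Theorem theorem1 (R : realType) (lam : R) :
  2^-1 <= lam -> lam < 1 ->
  ~ exists rho : 'M[R[i]]_(2 * 2),
      maximally_entangled_in (S_spec lam (1 - lam) 0 0) rho.
Proof.
move=> hl1 hl2 [rho [[[hh hp htr] hcp] hall]].
set L := real_complex R lam.
have lam0 : 0 < lam by apply: lt_le_trans hl1; rewrite invr_gt0 ltr0n.
have L0 : 0 <= L by rewrite /L ler0c ltW.
have L1 : 0 <= 1 - L.
  by rewrite -(rmorph1 (real_complex R)) -rmorphB ler0c subr_ge0 ltW.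
have hLn0 : L != 0.
  by rewrite /L -(rmorph0 (real_complex R)) (inj_eq (@complexI _)) gt_eqF.
have h1L : 1 - L != 0.
  rewrite -(rmorph1 (real_complex R)) -rmorphB -(rmorph0 (real_complex R)).
  by rewrite (inj_eq (@complexI _)) subr_eq0 eq_sym lt_eqF.
have hlist : [:: real_complex R lam; real_complex R (1 - lam); real_complex R 0; real_complex R 0]
    = [:: L; 1 - L; 0; 0] by rewrite rmorphB rmorph1 rmorph0.
have inT : S_spec lam (1 - lam) 0 0 (sT L).
  split; last by rewrite hlist sT_cp.
  split; [exact: sT_herm | exact: sT_psd | exact: sT_tr].
have inS : S_spec lam (1 - lam) 0 0 (sS L).
  split; last by rewrite hlist sS_cp.
  split; [exact: sS_herm | exact: sS_psd | exact: sS_tr].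
have [Lt [[pT hpT] hLt]] := hall _ inT.
have [Ls [[pS hpS] hLs]] := hall _ inS.
rewrite hpT sepP in hLt; rewrite hpS sepP in hLs.
have hr : hermm rho by [].
have pr : psdm rho by [].
have hsT := esym hLt; have hsS := esym hLs.
have : eigenvalue rho L by rewrite eigenvalue_root_char hcp hlist root_prod_XsubC mem_head.
move=> /eigenvalueP [v hv vn0].
pose a := adjmx v.
have ha : rho *m a = L *: a.
  by rewrite /a -{1}hh -adjmxM hv adjmxZ real_ge0.
have an0 : a != 0.
  by apply: contraNneq vn0 => h; rewrite -(adjmxK v) -/a h adjmx0.
have [j0 hj0] : exists j0, a j0 0 != 0.
  case: (pickP (fun j => a j 0 != 0)) => [j0 hj0|h0]; first by exists j0.
  exfalso; move/eqP: an0; apply; apply/matrixP => i j; rewrite [j]ord1 [RHS]mxE.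
  by have := h0 i; rewrite /= => /negbFE/eqP.
pose ci i := rho j0 i / a j0 0.
have [i hi] : exists i, forall c, rho *m (delta_mx i 0 : 'cV_(2*2)) != c *: a.
  case: (pickP (fun i => rho *m (delta_mx i 0 : 'cV_(2*2)) != ci i *: a)) => [i hi|hn].
    exists i => c; apply: contraNneq hi => hc.
    have -> : ci i = c.
      by rewrite /ci -mul_delta hc mxE mulfK.
    by rewrite hc.
  exfalso.
  have hc i : rho *m (delta_mx i 0 : 'cV_(2*2)) = ci i *: a by have := hn i; rewrite /= => /negbFE/eqP.
  have hE : forall k i, rho k i = ci i * a k 0.
    by move=> k i0; rewrite -mul_delta hc mxE.
  have : rho *m a = a.
    apply/matrixP => k j; rewrite [j]ord1 mxE.
    transitivity (a k 0 * \tr rho); last by rewrite htr mulr1.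
    rewrite /mxtrace mulr_sumr; apply: eq_bigr => i0 _.
    by rewrite !hE; ring.
  rewrite ha => /eqP; rewrite -subr_eq0 -{2}(scale1r a) -scalerBl scaler_eq0 (negbTE an0) orbF.
  by rewrite subr_eq0 => /eqP hL1; move: h1L; rewrite hL1 subrr eqxx.
have [ABt hABt hdt] := hasP (exT hr pr hsT hLn0).
have [ABs hABs hds] := hasP (exS hr pr hsS h1L).
pose y1 := L^-1 *: a.
have hy1 : rho *m y1 = a by rewrite /y1 -scalemxAr ha scalerA mulVf // scale1r.
pose y2 : 'cV[R[i]]_(2*2) := delta_mx i 0.
have [t1a t1b] := WT hr pr hsT hABt y1.
have [t2a t2b] := WT hr pr hsT hABt y2.
rewrite hy1 in t1a t1b.
have hG : Gm a (rho *m y2) = 0.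
  have := G_tens ABt.1 ABt.2 a (rho *m y2); rewrite (G_WT t1a t1b t2a t2b) => /esym/eqP.
  by rewrite mulf_eq0 expf_eq0 /= (negbTE hdt) /= => /eqP.
have [s1a s1b] := WS hr pr hsS hABs y1.
have [s2a s2b] := WS hr pr hsS hABs y2.
rewrite hy1 in s1a s1b.
exact: (final hds an0 hi s1a s1b s2a s2b hG).
Qed.
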